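(* Let $X=\{x_0,\ldots,x_m\}$, $\tilde X=\{\tilde x_1,\ldots,\tilde x_\ell\}$ (commuting), $d,d'\in\mathbb{R}^k[[\tilde X]]$ and let $c\in\mathbb{R}^\ell\langle\langle X\rangle\rangle$ be proper. Then $(d\cdot d')\circ c=(d\circ c)\sqcup\!\sqcup(d'\circ c)$, provided $d\circ c$ and $d'\circ c$ are well-defined, where $\circ$ denotes the Wiener-Fliess composition product and $d\cdot d'$ the Cauchy product.
   Context: $\mathbb{R}^\ell\langle\langle X\rangle\rangle$: formal power series in noncommuting letters of $X$ with coefficients in $\mathbb{R}^\ell$; $c$ is proper if $(c,\emptyset)=0$; $c_i$ is the $i$-th component. $\mathbb{R}^k[[\tilde X]]$: formal power series in commuting letters $\tilde x_1,\ldots,\tilde x_\ell$ with coefficients in $\mathbb{R}^k$. Shuffle product $\sqcup\!\sqcup$: bilinear, $(x_i\eta)\sqcup\!\sqcup(x_j\xi)=x_i(\eta\sqcup\!\sqcup x_j\xi)+x_j(x_i\eta\sqcup\!\sqcup\xi)$, $\eta\sqcup\!\sqcup\emptyset=\emptyset\sqcup\!\sqcup\eta=\eta$; on vector-valued series componentwise. Cauchy product: $(d\cdot d',\eta)=\sum_{\zeta\nu=\eta}(d,\zeta)(d',\nu)$ with componentwise products in $\mathbb{R}^k$. The Wiener-Fliess composition product of $d\in\mathbb{R}^k[[\tilde X]]$ and proper $c\in\mathbb{R}^\ell\langle\langle X\rangle\rangle$ is $d\circ c=\sum_{\tilde\eta\in\tilde X^\ast}(d,\tilde\eta)\,c^{\sqcup\!\sqcup\tilde\eta}\in\mathbb{R}^k\langle\langle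 X\rangle\rangle$, where $c^{\sqcup\!\sqcup\emptyset}=1$ and $c^{\sqcup\!\sqcup\tilde x_i\tilde\eta}=c_i\sqcup\!\sqcup c^{\sqcup\!\sqcup\tilde\eta}$; it is the generating series of $f_d\circ F_c$. *)

(* Defs.v *)
From HB Require Import structures.
From mathcomp Require Import all_boot all_order all_algebra.
From mathcomp Require Import reals.
Set Implicit Arguments. Unset Strict Implicit. Unset Printing Implicit Defensive.
Import Order.TTheory GRing.Theory Num.Theory.
Local Open Scope ring_scope.

(* Words over the (noncommuting) alphabet X = {x_0, ..., x_m}: letter x_i is i : 'I_m.+1. *)
Definition word (m : nat) := seq 'I_m.+1.

Definition sseries (R : Type) (m : nat) := word m -> R.
Definition ncseries (R : Type) (m n : nat) := word m -> 'I_n -> R.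

Definition proper_series (R : realType) (m n : nat) (c : ncseries R m n) : Prop :=
  forall i : 'I_n, c [::] i = 0.

(* Shuffle of two words, as the list (with multiplicity) of words it sums:
   (x_i eta) sh (x_j xi) = x_i (eta sh x_j xi) + x_j (x_i eta sh xi),
   eta sh [::] = [::] sh eta = eta. *)
Fixpoint shw (m : nat) (u v : word m) {struct u} : seq (word m) :=
  match u with
  | [::] => [:: v]
  | x :: u' =>
    let fix shv (v : word m) : seq (word m) :=
      match v with
      | [::] => [:: u]
      | y :: v' => map (cons x) (shw u' v) ++ map (cons y) (shv v')
      end
    in shv v
  end.

(* Bilinear extension of the shuffle to scalar series: the coefficient of w
   in a sh b is sum_{u,v} (a,u)(b,v) (u sh v, w); only |u| + |v| = |w|
   can contribute, so the sum is finite. *)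
Definition shuffle (R : realType) (m : nat) (a b : sseries R m) : sseries R m :=
  fun w => \sum_(i < (size w).+1)
             \sum_(u : i.-tuple 'I_m.+1) \sum_(v : (size w - i).-tuple 'I_m.+1)
               a u * b v * (count_mem w (shw u v))%:R.

Definition shuffle_vec (R : realType) (m k : nat) (a b : ncseries R m k) : ncseries R m k :=
  fun w j => shuffle (fun u => a u j) (fun u => b u j) w.

Definition sone (R : realType) (m : nat) : sseries R m :=
  fun w => if w is [::] then 1 else 0.

Definition shpow (R : realType) (m : nat) (a : sseries R m) (n : nat) : sseries R m :=
  iter n (shuffle a) (@sone R m).

(* Commutative words over Xt = {xt_1, ..., xt_ell} are monomials,
   i.e. exponent vectors (letter xt_(i+1) has index i : 'I_ell). *)
Definition monomial (ell : nat) := {ffun 'I_ell -> nat}.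

Definition cseries (R : Type) (ell k : nat) := monomial ell -> 'I_k -> R.

(* c^{sh eta} for eta = xt^alpha : c_1^{sh alpha_1} sh ... sh c_ell^{sh alpha_ell}
   (order irrelevant since the shuffle is commutative and associative);
   c^{sh empty} = 1. *)
Definition shmon (R : realType) (m ell : nat) (c : ncseries R m ell) (alpha : monomial ell)
  : sseries R m :=
  \big[@shuffle R m / @sone R m]_(i < ell) shpow (fun w => c w i) (alpha i).

(* Cauchy product: (d . d', gamma) = sum_{alpha + beta = gamma} (d,alpha)(d',beta),
   componentwise in R^k.  alpha ranges over exponent vectors below gamma. *)
Definition cauchy (R : realType) (ell k : nat) (d d' : cseries R ell k) : cseries R ell k :=
  fun gamma j =>
    \sum_(a : {ffun 'I_ell -> 'I_(\max_(i < ell) gamma i).+1} | [forall i, (a i <= gamma i)%N])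
      d [ffun i => nat_of_ord (a i)] j * d' [ffun i => (gamma i - a i)%N] j.

(* Wiener-Fliess composition d o c = sum_eta (d,eta) c^{sh eta}.  For proper c,
   (c^{sh alpha}, w) = 0 as soon as |alpha| > |w|, so the sum is finite and it is
   exactly the sum over exponent vectors with every exponent <= |w|. *)
Definition wf_comp (R : realType) (m ell k : nat) (d : cseries R ell k) (c : ncseries R m ell)
  : ncseries R m k :=
  fun w j =>
    \sum_(a : {ffun 'I_ell -> 'I_(size w).+1})
      d [ffun i => nat_of_ord (a i)] j * shmon c [ffun i => nat_of_ord (a i)] w.

(* Main.v *)
Require Import Defs.
From HB Require Import structures.
From mathcomp Require Import all_boot all_order all_algebra.
From mathcomp Require Import reals.
From Stdlib Require Import FunctionalExtensionality.
From mathcomp Require Import zify.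
Set Implicit Arguments. Unset Strict Implicit. Unset Printing Implicit Defensive.
Import Order.TTheory GRing.Theory Num.Theory.
Local Open Scope ring_scope.

Section Shuf.
Variables (R : realType) (m : nat).
Implicit Types (a b c : sseries R m) (u v w : word m).

Fixpoint Wn (i : nat) : seq (word m) :=
  if i is i'.+1 then [seq x :: u | x <- enum 'I_m.+1, u <- Wn i'] else [:: [::]].

Lemma tupsum i (F : word m -> R) :
  \sum_(u : i.-tuple 'I_m.+1) F u = \sum_(u <- Wn i) F u.
Proof.
elim: i F => [|i IH] F.
  rewrite (big_pred1 [tuple]) ?big_seq1 // => t; apply/esym/eqP/val_inj; by case: t => [[]].
rewrite /= big_allpairs_dep /=.
rewrite (reindex (fun p : 'I_m.+1 * i.-tuple 'I_m.+1 => [tuple of p.1 :: p.2])) /=; last first.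
  exists (fun t : i.+1.-tuple 'I_m.+1 => (thead t, [tuple of behead t])).
    case=> x t _ /=; congr (_, _); exact: val_inj.
  by move=> t _; rewrite /= [in RHS](tuple_eta t).
rewrite -(pair_big predT predT (fun x (t : i.-tuple 'I_m.+1) => F (x :: t))) /=.
rewrite big_enum /=; apply: eq_bigr => x _; exact: IH.
Qed.

Definition cnt w u v : R := (count_mem w (shw u v))%:R.

Lemma shuffleW a b w : shuffle a b w =
  \sum_(i < (size w).+1) \sum_(u <- Wn i) \sum_(v <- Wn (size w - i)) a u * b v * cnt w u v.
Proof.
apply: eq_bigr => i _.
transitivity (\sum_(u <- Wn i) \sum_(v : (size w - i).-tuple 'I_m.+1) a u * b v * cnt w u v).
  exact: (tupsum i (fun u => \sum_(v : (size w - i).-tuple 'I_m.+1) a u * b v * cnt w u v)).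
apply: eq_bigr => u _; exact: (tupsum _ (fun v => a u * b v * cnt w u v)).
Qed.

Lemma count_shw x w u v : count_mem (x :: w) (shw u v) =
  ((if u is y :: u' then (y == x) * count_mem w (shw u' v) else 0) +
   (if v is z :: v' then (z == x) * count_mem w (shw u v') else 0))%N.
Proof.
have cm : forall y (L : seq (word m)), count_mem (x :: w) (map (cons y) L) = ((y == x) * count_mem w L)%N.
  move=> y L; elim: L => [|l L IHL] /=; first by rewrite muln0.
  by rewrite IHL mulnDr eqseq_cons; case: (y == x); case: (l == w).
case: u => [|y u'].
  case: v => [|z v'] /=; first by [].
  by rewrite eqseq_cons !addn0 add0n; case: (z==x); case: (v'==w).
case: v => [|z v'] /=.
  have -> : shw u' [::] = [:: u'] by case: u'.
  by rewrite /= eqseq_cons; case: (y==x); case: (u'==w).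
by rewrite count_cat !cm.
Qed.


Lemma shuffle_nil a b : shuffle a b [::] = a [::] * b [::].
Proof. by rewrite shuffleW /= big_ord1 /= !big_seq1 /cnt /= mulr1. Qed.

Definition dl (x : 'I_m.+1) a : sseries R m := fun u => a (x :: u).

Lemma shuffle_cons a b x w :
  shuffle a b (x :: w) = shuffle (dl x a) b w + shuffle a (dl x b) w.
Proof.
rewrite !shuffleW /=.
set n := size w.
pose cA u v : R := if u is y :: u' then (y == x)%:R * cnt w u' v else 0.
pose cB u v : R := if v is z :: v' then (z == x)%:R * cnt w u v' else 0.
have E : forall u v, cnt (x :: w) u v = cA u v + cB u v.
  move=> u v; rewrite /cnt count_shw natrD; case: u => [|y u']; case: v => [|z v'] //=;
    by rewrite ?natrM ?add0r ?addr0.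
transitivity ((\sum_(i < n.+2) \sum_(u <- Wn i) \sum_(v <- Wn (n.+1 - i)) a u * b v * cA u v) +
   \sum_(i < n.+2) \sum_(u <- Wn i) \sum_(v <- Wn (n.+1 - i)) a u * b v * cB u v).
  rewrite -big_split; apply: eq_bigr => i _; rewrite -big_split; apply: eq_bigr => u _.
  rewrite -big_split; apply: eq_bigr => v _; by rewrite E mulrDr.
congr (_ + _).
  rewrite big_ord_recl /= big_seq1 big1 ?add0r; last by move=> v _; rewrite mulr0.
  apply: eq_bigr => i _ /=; have -> : bump 0 i = i.+1 by [].
  rewrite add0n subSS big_allpairs_dep /= big_enum /= (bigD1 x) //= [X in _ + X]big1 ?addr0.
    apply: eq_bigr => u _; apply: eq_bigr => v _; by rewrite eqxx mul1r.
  move=> y /negbTE yx; apply: big1 => u _; apply: big1 => v _; by rewrite yx mul0r mulr0.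
rewrite big_ord_recr /= subnn [X in _ + X]big1 ?addr0; last first.
  by move=> u _; rewrite /= big_seq1 mulr0.
apply: eq_bigr => i _ /=; apply: eq_bigr => u _.
rewrite subSn ?(ltnSE (ltn_ord i)) //= big_allpairs_dep /= big_enum /= (bigD1 x) //= [X in _ + X]big1 ?addr0.
  apply: eq_bigr => v _; by rewrite eqxx mul1r.
move=> y /negbTE yx; apply: big1 => v _; by rewrite yx mul0r mulr0.
Qed.


Lemma shuffle_local a a' b b' w :
  (forall u, (size u <= size w)%N -> a u = a' u) ->
  (forall v, (size v <= size w)%N -> b v = b' v) ->
  shuffle a b w = shuffle a' b' w.
Proof.
move=> ha hb; rewrite /shuffle; apply: eq_bigr => i _; apply: eq_bigr => u _.
apply: eq_bigr => v _; rewrite ha ?hb // size_tuple ?leq_subr //.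
by rewrite -ltnS.
Qed.

Lemma shuffle0r a w : shuffle a (fun _ => 0) w = 0.
Proof.
elim: w a => [|x w IH] a; first by rewrite shuffle_nil mulr0.
by rewrite shuffle_cons IH (IH a) addr0.
Qed.

Lemma shuffleC a b w : shuffle a b w = shuffle b a w.
Proof.
elim: w a b => [|x w IH] a b; first by rewrite !shuffle_nil mulrC.
by rewrite !shuffle_cons IH (IH a) addrC.
Qed.

Lemma shuffle0l a w : shuffle (fun _ => 0) a w = 0.
Proof. by rewrite shuffleC shuffle0r. Qed.

Lemma shuffleDl a a' b w :
  shuffle (fun u => a u + a' u) b w = shuffle a b w + shuffle a' b w.
Proof.
elim: w a a' b => [|x w IH] a a' b; first by rewrite !shuffle_nil mulrDl.
rewrite !shuffle_cons (IH (dl x a) (dl x a')) IH.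
by rewrite addrACA.
Qed.

Lemma shuffleDr a b b' w :
  shuffle a (fun u => b u + b' u) w = shuffle a b w + shuffle a b' w.
Proof. by rewrite shuffleC shuffleDl !(shuffleC a). Qed.

Lemma shufflesum (I : finType) (k : I -> R) (F : I -> sseries R m) b w :
  shuffle (fun u => \sum_t k t * F t u) b w = \sum_t k t * shuffle (F t) b w.
Proof.
elim: w F b => [|x w IH] F b.
  rewrite shuffle_nil mulr_suml; apply: eq_bigr => t _; by rewrite shuffle_nil mulrA.
rewrite shuffle_cons (IH (fun t => dl x (F t))) IH -big_split; apply: eq_bigr => t _.
by rewrite shuffle_cons mulrDr.
Qed.

Lemma shufflesumr (I : finType) (k : I -> R) (F : I -> sseries R m) a w :
  shuffle a (fun u => \sum_t k t * F t u) w = \sum_t k t * shuffle a (F t) w.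
Proof.
rewrite shuffleC shufflesum; apply: eq_bigr => t _; by rewrite shuffleC.
Qed.

Lemma shuffle1r a w : shuffle a (@sone R m) w = a w.
Proof.
elim: w a => [|x w IH] a; first by rewrite shuffle_nil mulr1.
rewrite shuffle_cons IH.
have -> : dl x (@sone R m) = (fun _ => 0) by [].
by rewrite shuffle0r addr0.
Qed.

Lemma shuffleA a b c w : shuffle (shuffle a b) c w = shuffle a (shuffle b c) w.
Proof.
elim: w a b c => [|x w IH] a b c; first by rewrite !shuffle_nil mulrA.
rewrite !shuffle_cons.
have -> : dl x (shuffle a b) = (fun u => shuffle (dl x a) b u + shuffle a (dl x b) u).
  by apply: functional_extensionality => u; rewrite /dl shuffle_cons.
have -> : dl x (shuffle b c) = (fun u => shuffle (dl x b) c u + shuffle b (dl x c) u).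
  by apply: functional_extensionality => u; rewrite /dl shuffle_cons.
by rewrite shuffleDl shuffleDr !IH addrA.
Qed.

Lemma shuffleAf : associative (@shuffle R m).
Proof. move=> a b c; apply: functional_extensionality => w; by rewrite shuffleA. Qed.
Lemma shuffleCf : commutative (@shuffle R m).
Proof. move=> a b; apply: functional_extensionality => w; exact: shuffleC. Qed.
Lemma shuffle1f : left_id (@sone R m) (@shuffle R m).
Proof. move=> a; apply: functional_extensionality => w; by rewrite shuffleC shuffle1r. Qed.

HB.instance Definition _ := Monoid.isComLaw.Build (sseries R m) (@sone R m) (@shuffle R m)
  shuffleAf shuffleCf shuffle1f.

End Shuf.

Section Ord.
Variables (R : realType) (m : nat).
Implicit Types (a b : sseries R m) (u v w : word m).

Definition ordge a p := forall u, (size u < p)%N -> a u = 0.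

Lemma ordge_shuffle a b p q : ordge a p -> ordge b q -> ordge (shuffle a b) (p + q).
Proof.
move=> ha hb u; elim: u a b p q ha hb => [|x w IH] a b p q ha hb /= lt.
  rewrite shuffle_nil; case: p ha lt => [|p] ha lt.
    by rewrite (hb [::]) ?mulr0.
  by rewrite (ha [::]) ?mul0r.
rewrite shuffle_cons (IH (dl x a) b p.-1 q) ?(IH a (dl x b) p q.-1) ?addr0 //.
- by move=> u hu; apply: hb => /=; lia.
- lia.
- by move=> u hu; apply: ha => /=; lia.
- lia.
Qed.

Lemma ordge_shpow a n : ordge a 1 -> ordge (shpow a n) n.
Proof.
move=> ha; elim: n => [|n IH]; first by move=> u.
have -> : shpow a n.+1 = shuffle a (shpow a n) by [].
rewrite -add1n; exact: ordge_shuffle.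
Qed.

Lemma ordge_shmon ell (c : ncseries R m ell) (al : monomial ell) :
  proper_series c -> ordge (shmon c al) (\sum_(i < ell) al i)%N.
Proof.
move=> pc; rewrite /shmon.
apply: (big_rec2 (fun A n => ordge A n)); first by move=> u.
move=> i A n _ hA; apply: ordge_shuffle => //; apply: ordge_shpow.
by case=> [|y u] //= _; exact: pc.
Qed.

Lemma shmon_vanish ell (c : ncseries R m ell) (al : monomial ell) w i :
  proper_series c -> (size w < al i)%N -> shmon c al w = 0.
Proof.
move=> pc lt; apply: (@ordge_shmon ell c al pc w); apply: (leq_trans lt).
by rewrite (bigD1 i) //= leq_addr.
Qed.

Lemma shpowD a n1 n2 : shpow a (n1 + n2) = shuffle (shpow a n1) (shpow a n2).
Proof.
elim: n1 => [|n IH]; first by rewrite add0n shuffle1f.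
have -> : shpow a (n.+1 + n2) = shuffle a (shpow a (n + n2)) by [].
by rewrite IH shuffleAf.
Qed.

Lemma shmonD ell (c : ncseries R m ell) (al be : monomial ell) :
  shmon c [ffun i => (al i + be i)%N] = shuffle (shmon c al) (shmon c be).
Proof.
rewrite /shmon -big_split /=; apply: eq_bigr => i _; by rewrite ffunE shpowD.
Qed.

End Ord.

Definition tonat ell K (a : {ffun 'I_ell -> 'I_K}) : monomial ell := [ffun i => nat_of_ord (a i)].

Section Main.
Variables (R : realType) (m ell k : nat) (d d' : cseries R ell k) (c : ncseries R m ell) (j : 'I_k).

Lemma tonatE K (a : {ffun 'I_ell -> 'I_K}) i : tonat a i = a i.
Proof. by rewrite ffunE. Qed.

Lemma inord_small N M x : (x <= N)%N -> (N <= M)%N -> nat_of_ord (inord x : 'I_M.+1) = x.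
Proof. move=> h1 h2; rewrite inordK // ltnS; exact: leq_trans h1 h2. Qed.

Lemma widen_sum N M (P : pred (monomial ell)) (G : monomial ell -> R) :
  (N <= M)%N -> (forall al, P al -> ~~ [forall i, (al i <= N)%N] -> G al = 0) ->
  \sum_(a : {ffun 'I_ell -> 'I_M.+1} | P (tonat a)) G (tonat a) =
  \sum_(b : {ffun 'I_ell -> 'I_N.+1} | P (tonat b)) G (tonat b).
Proof.
move=> le van.
rewrite (bigID (fun a : {ffun 'I_ell -> 'I_M.+1} => [forall i, (a i <= N)%N])) /=.
rewrite [X in _ + X]big1 ?addr0; last first.
  move=> a /andP [Pa Qa]; apply: van => //; apply: contra Qa => /forallP H.
  by apply/forallP => i; have := H i; rewrite ffunE.
rewrite (reindex_onto (fun b : {ffun 'I_ell -> 'I_N.+1} => [ffun i => inord (b i)] : {ffun 'I_ell -> 'I_M.+1})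
   (fun a : {ffun 'I_ell -> 'I_M.+1} => [ffun i => inord (a i)] : {ffun 'I_ell -> 'I_N.+1})) /=; last first.
  move=> a /andP [_ /forallP Q]; apply/ffunP => i; rewrite !ffunE; apply: val_inj => /=.
  rewrite inordK; last by rewrite ltnS (leq_trans _ le) // -ltnS.
  by rewrite inordK // ltnS; exact: Q.
have E : forall b : {ffun 'I_ell -> 'I_N.+1},
    tonat ([ffun i => inord (b i)] : {ffun 'I_ell -> 'I_M.+1}) = tonat b.
  by move=> b; apply/ffunP => i; rewrite !ffunE inordK // ltnS (leq_trans _ le) // -ltnS.
apply: eq_big => [b|b _]; last by rewrite E.
have hb : forall i, (b i <= N)%N by move=> i; rewrite -ltnS.
have hbM : forall i, (b i < M.+1)%N by move=> i; rewrite ltnS (leq_trans (hb i) le).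
rewrite E; case: (P (tonat b)) => //=.
apply/andP; split.
  by apply/forallP => i; rewrite ffunE inordK ?hbM.
apply/eqP/ffunP => i; rewrite !ffunE; apply: val_inj => /=.
by rewrite (inordK (hbM i)) inordK.
Qed.


Lemma cauchyE N (ga : monomial ell) : (forall i, ga i <= N)%N ->
  cauchy d d' ga j = \sum_(a : {ffun 'I_ell -> 'I_N.+1} | [forall i, (tonat a i <= ga i)%N])
       d (tonat a) j * d' [ffun i => (ga i - tonat a i)%N] j.
Proof.
move=> hg; rewrite /cauchy.
pose P := fun al : monomial ell => [forall i, (al i <= ga i)%N].
pose G := fun al : monomial ell => d al j * d' [ffun i => (ga i - al i)%N] j.
transitivity (\sum_(a : {ffun 'I_ell -> 'I_(\max_(i < ell) ga i).+1} | P (tonat a)) G (tonat a)).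
  apply: eq_big => [a|a _]; first by apply: eq_forallb => i; rewrite ffunE.
  rewrite /G; congr (_ * _); congr (d' _ j); apply/ffunP => i; by rewrite !ffunE.
rewrite -(widen_sum (N := \max_(i < ell) ga i) (M := N) (P := P) (G := G)).
- apply: eq_big => [a|a _] //.
- by apply/bigmax_leqP => i _; exact: hg.
- move=> al /forallP Pa /forallPn [i]; by rewrite (leq_trans (Pa i) (@leq_bigmax _ ga i)).
Qed.

Lemma wf_widen N (e : cseries R ell k) u : proper_series c -> (size u <= N)%N ->
  wf_comp e c u j = \sum_(a : {ffun 'I_ell -> 'I_N.+1}) e (tonat a) j * shmon c (tonat a) u.
Proof.
move=> pc hu; rewrite /wf_comp; symmetry.
apply: (widen_sum (N := size u) (M := N) (P := predT) (G := fun al => e al j * shmon c al u) hu).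
move=> al _ /forallPn [i]; rewrite -ltnNge => lt.
by rewrite (shmon_vanish pc lt) mulr0.
Qed.

Lemma L3 w N (hN : size w = N) (pc : proper_series c) (a : {ffun 'I_ell -> 'I_N.+1}) :
 \sum_(g : {ffun 'I_ell -> 'I_N.+1} | [forall i, (tonat a i <= tonat g i)%N])
    d (tonat a) j * d' [ffun i => (tonat g i - tonat a i)%N] j * shmon c (tonat g) w
 = \sum_(b : {ffun 'I_ell -> 'I_N.+1})
    d (tonat a) j * d' (tonat b) j * shmon c [ffun i => (tonat a i + tonat b i)%N] w.
Proof.
pose h := fun b : {ffun 'I_ell -> 'I_N.+1} => [ffun i => inord (a i + b i)] : {ffun 'I_ell -> 'I_N.+1}.
pose h' := fun g : {ffun 'I_ell -> 'I_N.+1} => [ffun i => inord (g i - a i)] : {ffun 'I_ell -> 'I_N.+1}.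
have ltN : forall (g : {ffun 'I_ell -> 'I_N.+1}) i, (g i <= N)%N by move=> g i; rewrite -ltnS.
rewrite (reindex_onto h h') /=; last first.
  move=> g /forallP P; apply/ffunP => i; rewrite !ffunE; apply: val_inj => /=.
  have := P i; rewrite !ffunE => Pi.
  rewrite (@inordK N (g i - a i)); last by rewrite ltnS (leq_trans (leq_subr _ _) (ltN g i)).
  by rewrite subnKC // inordK.
rewrite [RHS](bigID (fun b : {ffun 'I_ell -> 'I_N.+1} => [forall i, (a i + b i <= N)%N])) /=.
rewrite [X in _ = _ + X]big1 ?addr0; last first.
  move=> b /forallPn [i]; rewrite -ltnNge => lt.
  by rewrite (@shmon_vanish R m ell c _ w i pc) ?mulr0 // ffunE !tonatE hN.
have Peq : forall b, ([forall i, (tonat a i <= tonat (h b) i)%N] && (h' (h b) == b)) = [forall i, (a i + b i <= N)%N].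
  move=> b.
  apply/idP/idP.
    case/andP => /forallP P /eqP E; apply/forallP => i.
    have := P i; have := congr1 (fun f : {ffun 'I_ell -> 'I_N.+1} => nat_of_ord (f i)) E.
    rewrite /h /h' !ffunE /=.
    set v := nat_of_ord (inord (a i + b i) : 'I_N.+1) => Ei Pi.
    have vN : (v <= N)%N by rewrite /v -ltnS.
    rewrite inordK in Ei; last by rewrite ltnS (leq_trans (leq_subr _ _) vN).
    by rewrite -Ei subnKC.
  move/forallP => Q; apply/andP; split.
    by apply/forallP => i; rewrite !ffunE inordK ?ltnS ?Q // leq_addr.
  apply/eqP/ffunP => i; rewrite !ffunE; apply: val_inj => /=.
  by rewrite (@inordK N (a i + b i)) ?ltnS ?Q // addKn inordK.
apply: eq_big => [b|b]; first exact: Peq.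
rewrite Peq => /forallP Qb.
have E1 : tonat (h b) = [ffun i => (tonat a i + tonat b i)%N].
  by apply/ffunP => i; rewrite !ffunE inordK // ltnS Qb.
have E2 : [ffun i => (tonat (h b) i - tonat a i)%N] = tonat b.
  by apply/ffunP => i; rewrite E1 !ffunE addKn.
by rewrite E2 E1.
Qed.

Lemma mainL w (pc : proper_series c) :
  wf_comp (cauchy d d') c w j =
  shuffle (fun u => wf_comp d c u j) (fun u => wf_comp d' c u j) w.
Proof.
rewrite (shuffle_local (a' := fun u => \sum_(al : {ffun 'I_ell -> 'I_(size w).+1}) d (tonat al) j * shmon c (tonat al) u)
   (b' := fun u => \sum_(be : {ffun 'I_ell -> 'I_(size w).+1}) d' (tonat be) j * shmon c (tonat be) u));
  [| by move=> u hu; exact: wf_widen | by move=> u hu; exact: wf_widen].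
rewrite shufflesum /wf_comp.
transitivity (\sum_(g : {ffun 'I_ell -> 'I_(size w).+1})
   \sum_(a : {ffun 'I_ell -> 'I_(size w).+1} | [forall i, (tonat a i <= tonat g i)%N])
    d (tonat a) j * d' [ffun i => (tonat g i - tonat a i)%N] j * shmon c (tonat g) w).
  apply: eq_bigr => g _.
  by rewrite (cauchyE (N := size w)) ?mulr_suml // => i; rewrite ffunE -ltnS.
rewrite (exchange_big_dep xpredT) //=.
apply: eq_bigr => a _.
rewrite (L3 (N := size w)) // shufflesumr mulr_sumr; apply: eq_bigr => b _.
by rewrite shmonD mulrA.
Qed.

End Main.

Theorem theorem12 (R : realType) (m ell k : nat)
    (d d' : cseries R ell k) (c : ncseries R m ell) :
  proper_series c ->
  forall (w : word m) (j : 'I_k),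
    wf_comp (cauchy d d') c w j = shuffle_vec (wf_comp d c) (wf_comp d' c) w j.
Proof.
move=> pc w j; rewrite /shuffle_vec; exact: mainL.
Qed.
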